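(* Let $\mathcal L$ be a linearly ordered non-discrete MV-algebra and let $0\le p<q\le 1$ in $L$. Then $$[q,1]\sqsubseteq\!\!\to\,]p,1]=\,]q\to p,1].$$
   Context: $\mathcal L=(L,\oplus,\lnot,0)$ is a linearly ordered MV-algebra. We write $1=\lnot 0$ and $x\to y=\lnot x\oplus y$. Non-discrete means no element has an immediate successor or an immediate predecessor. We write $[p,1]=\{x: x\ge p\}$ and $]p,1]=\{x:x>p\}$. For an upward-closed $\mathcal F$ and $a\in L$, let $\mathcal F_a=\{z:z\to a\notin\mathcal F\}$. For upward-closed $\mathcal F\subseteq\mathcal G$ we put $\mathcal F\sqsubseteq\!\!\to\mathcal G=\bigcap_{a\in L\setminus\mathcal G}\mathcal F_a$. *)

(* Defs.v *)
From Stdlib Require Import Classical.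

(* An MV-algebra (Chang's axioms, in the equational form of Cignoli–D'Ottaviano–Mundici):
   (L, (+), 0) commutative monoid, ~~x = x, x (+) ~0 = ~0,
   ~(~x (+) y) (+) y = ~(~y (+) x) (+) x. *)
Record MVAlgebra := {
  mv_car :> Type;
  mv_oplus : mv_car -> mv_car -> mv_car;
  mv_neg : mv_car -> mv_car;
  mv_zero : mv_car;
  mv_oplusA : forall x y z, mv_oplus x (mv_oplus y z) = mv_oplus (mv_oplus x y) z;
  mv_oplusC : forall x y, mv_oplus x y = mv_oplus y x;
  mv_oplus0 : forall x, mv_oplus x mv_zero = x;
  mv_negK : forall x, mv_neg (mv_neg x) = x;
  mv_oplus1 : forall x, mv_oplus x (mv_neg mv_zero) = mv_neg mv_zero;
  mv_luk : forall x y,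
    mv_oplus (mv_neg (mv_oplus (mv_neg x) y)) y =
    mv_oplus (mv_neg (mv_oplus (mv_neg y) x)) x
}.

Arguments mv_oplus {_}.
Arguments mv_neg {_}.
Arguments mv_zero {_}.

Section Defs.
Variable L : MVAlgebra.

Definition mv_one : L := mv_neg mv_zero.

Definition mv_imp (x y : L) : L := mv_oplus (mv_neg x) y.

Definition mv_le (x y : L) : Prop := mv_imp x y = mv_one.
Definition mv_lt (x y : L) : Prop := mv_le x y /\ x <> y.

Definition linearly_ordered : Prop := forall x y : L, mv_le x y \/ mv_le y x.

Definition mv_covers (x y : L) : Prop :=
  mv_lt x y /\ ~ (exists z, mv_lt x z /\ mv_lt z y).

Definition non_discrete : Prop :=
  (forall x : L, ~ exists y, mv_covers x y) /\
  (forall x : L, ~ exists y, mv_covers y x).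

Definition upward_closed (F : L -> Prop) : Prop :=
  forall x y, F x -> mv_le x y -> F y.

Definition closed_up (p : L) : L -> Prop := fun x => mv_le p x.
Definition open_up (p : L) : L -> Prop := fun x => mv_lt p x.

(* F_a = { z : z -> a \notin F } *)
Definition Fsub (F : L -> Prop) (a : L) : L -> Prop := fun z => ~ F (mv_imp z a).

(* F ⊑→ G = ⋂_{a ∈ L \ G} F_a *)
Definition sqimp (F G : L -> Prop) : L -> Prop :=
  fun z => forall a : L, ~ G a -> Fsub F a z.

End Defs.

Arguments mv_one {_}.
Arguments mv_imp {_}.
Arguments mv_le {_}.
Arguments mv_lt {_}.
Arguments closed_up {_}.
Arguments open_up {_}.
Arguments sqimp {_}.

(* Main.v *)
Require Import Defs.
From Stdlib Require Import Classical.

Section S.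
Variable L : MVAlgebra.

Lemma neg1 : mv_neg (@mv_one L) = mv_zero.
Proof. unfold mv_one. apply mv_negK. Qed.

Lemma zero_op (x : L) : mv_oplus mv_zero x = x.
Proof. rewrite mv_oplusC. apply mv_oplus0. Qed.

Lemma one_op (x : L) : mv_oplus mv_one x = mv_one.
Proof. rewrite mv_oplusC. apply mv_oplus1. Qed.

Lemma negx_x (x : L) : mv_oplus (mv_neg x) x = mv_one.
Proof.
  pose proof (mv_luk L x mv_one) as H.
  assert (E : forall y : L, mv_oplus y mv_one = mv_one) by (intro; apply mv_oplus1).
  rewrite !E, neg1, zero_op in H. auto.
Qed.

Lemma le_refl (x : L) : mv_le x x.
Proof. apply negx_x. Qed.

Lemma le_ex (x y : L) : mv_le x y -> exists w, y = mv_oplus x w.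
Proof.
  unfold mv_le, mv_imp. intro H.
  exists (mv_neg (mv_oplus (mv_neg y) x)).
  rewrite mv_oplusC, mv_luk, H, neg1, zero_op. auto.
Qed.

Lemma ex_le (x w : L) : mv_le x (mv_oplus x w).
Proof.
  unfold mv_le, mv_imp. rewrite mv_oplusA, negx_x, one_op. auto.
Qed.

Lemma le_trans (x y z : L) : mv_le x y -> mv_le y z -> mv_le x z.
Proof.
  intros H1 H2. destruct (le_ex _ _ H1) as [w ->].
  destruct (le_ex _ _ H2) as [v ->]. rewrite <- mv_oplusA. apply ex_le.
Qed.

Lemma le_antisym (x y : L) : mv_le x y -> mv_le y x -> x = y.
Proof.
  unfold mv_le, mv_imp. intros H1 H2.
  pose proof (mv_luk L x y) as H. rewrite H1, H2, neg1, !zero_op in H. auto.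
Qed.

Lemma imp_mono (z a p : L) : mv_le a p -> mv_le (mv_imp z a) (mv_imp z p).
Proof.
  intro H. destruct (le_ex _ _ H) as [w ->]. unfold mv_imp.
  rewrite mv_oplusA. apply ex_le.
Qed.

Lemma swap (q z p : L) : mv_le q (mv_imp z p) -> mv_le z (mv_imp q p).
Proof.
  unfold mv_le, mv_imp. intro H.
  rewrite mv_oplusA, (mv_oplusC _ (mv_neg z)), <- mv_oplusA. auto.
Qed.
End S.

Theorem mainTheorem15 (L : MVAlgebra)
  (Hlin : linearly_ordered L) (Hnd : non_discrete L)
  (p q : L) (H0p : mv_le mv_zero p) (Hpq : mv_lt p q) (Hq1 : mv_le q mv_one) :
  forall z : L, sqimp (closed_up q) (open_up p) z <-> open_up (mv_imp q p) z.
Proof.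
  intro z. unfold sqimp, Fsub, closed_up, open_up, mv_lt. split.
  - intro H.
    assert (Hn : ~ mv_le z (mv_imp q p)).
    { intro Hz. apply (H p).
      + intros [_ Hne]. apply Hne; auto.
      + apply swap. exact Hz. }
    destruct (Hlin z (mv_imp q p)) as [h|h]; [contradiction|].
    split; auto. intro E. apply Hn. rewrite E. apply le_refl.
  - intros [Hle Hne] a Ha Hq.
    assert (Hap : mv_le a p).
    { destruct (Hlin a p) as [h|h]; auto.
      destruct (classic (p = a)) as [E|E].
      + rewrite E. apply le_refl.
      + exfalso. apply Ha. auto. }
    pose proof (le_trans _ _ _ _ Hq (imp_mono _ z _ _ Hap)) as Hq'.
    apply Hne. apply le_antisym; auto. apply swap; auto.
Qed.
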